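(* Let $k$ be a left Noetherian ring. Any submodule of a finitely generated $\mathrm{FS}_B^{\mathrm{op}}$-module over $k$ is itself finitely generated.
   Context: $\mathrm{FS}_B$ is the category whose objects are pairs $(E,\sigma)$ with $E$ a finite set and $\sigma:E\to E$ an involution with exactly one fixed point, and whose morphisms $(E_1,\sigma_1)\to(E_2,\sigma_2)$ are surjective maps $\varphi:E_1\to E_2$ with $\varphi\circ\sigma_1=\sigma_2\circ\varphi$. Every object is isomorphic to $[-n,n]=\{-n,\dots,n\}$ with involution $k\mapsto -k$, for some $n\in\mathbb N$. An $\mathrm{FS}_B^{\mathrm{op}}$-module over $k$ is a contravariant functor from $\mathrm{FS}_B$ to the category of left $k$-modules. For an object $x$, the principal projective $P_x$ is the module sending $y$ to the free $k$-module with basis $\mathrm{Hom}_{\mathrm{FS}_B}(y,x)$, with maps given on basis elements by composition. A module $M$ is finitely generated if there are finitely many objects $x_1,\dots,x_r$ and a surjection $\bigoplus_i P_{x_i}\to M$. *)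

(* Defs.v *)
From mathcomp Require Import all_boot all_order all_algebra.
Set Implicit Arguments. Unset Strict Implicit. Unset Printing Implicit Defensive.
Import GRing.Theory.
Local Open Scope ring_scope.

(** Skeleton of FS_B: the object [-n,n] with involution k |-> -k is encoded as
    'I_(2n+1), where the index i stands for the integer i - n; the involution
    is then rev_ord (i |-> 2n - i), whose unique fixed point is n (i.e. 0). *)
Definition obj (n : nat) : finType := 'I_(2 * n + 1).

Definition sigmaB (n : nat) (i : obj n) : obj n := rev_ord i.

Definition is_mor (n m : nat) (f : {ffun obj n -> obj m}) : bool :=
  [forall i, f (sigmaB i) == sigmaB (f i)] && [forall j, exists i, f i == j].

Definition id_mor (n : nat) : {ffun obj n -> obj n} := [ffun i => i].

Definition comp_mor (n m p : nat) (g : {ffun obj m -> obj p})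
  (f : {ffun obj n -> obj m}) : {ffun obj n -> obj p} := [ffun i => g (f i)].

(** An FS_B^op-module over k: a contravariant functor from (the skeleton of)
    FS_B to left k-modules.  [act f] is M(f) : M m -> M n for f : n -> m;
    its values on non-morphisms f are irrelevant. *)
Record FSBop_module (k : pzRingType) := {
  Mod :> nat -> lmodType k;
  act : forall n m, {ffun obj n -> obj m} -> Mod m -> Mod n;
  act_add : forall n m (f : {ffun obj n -> obj m}) (x y : Mod m),
      is_mor f -> act f (x + y) = act f x + act f y;
  act_scale : forall n m (f : {ffun obj n -> obj m}) (a : k) (x : Mod m),
      is_mor f -> act f (a *: x) = a *: act f x;
  act_id : forall n (x : Mod n), act (id_mor n) x = x;
  act_comp : forall n m p (f : {ffun obj n -> obj m}) (g : {ffun obj m -> obj p})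
      (x : Mod p), is_mor f -> is_mor g ->
      act (comp_mor g f) x = act f (act g x)
}.
Arguments act {k} f0 {n m}.

Definition is_submodule (k : pzRingType) (M : FSBop_module k)
  (N : forall n, M n -> Prop) : Prop :=
  [/\ (forall n, N n 0),
      (forall n (x y : M n), N n x -> N n y -> N n (x + y)),
      (forall n (a : k) (x : M n), N n x -> N n (a *: x)) &
      (forall n m (f : {ffun obj n -> obj m}) (x : M m),
          is_mor f -> N m x -> N n (act M f x))].

(** y : M m lies in the image, at object m, of the map
    \bigoplus_{i<r} P_{deg i} -> M sending the generator id of P_{deg i}
    to x i (so the basis element f : m -> deg i goes to M(f)(x i)). *)
Definition generated_by (k : pzRingType) (M : FSBop_module k) (r : nat)
  (deg : 'I_r -> nat) (x : forall i, M (deg i)) (m : nat) (y : M m) : Prop :=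
  exists c : forall i : 'I_r, {ffun obj m -> obj (deg i)} -> k,
    y = \sum_(i < r) \sum_(f : {ffun obj m -> obj (deg i)} | is_mor f)
          c i f *: act M f (x i).

Definition fg_submodule (k : pzRingType) (M : FSBop_module k)
  (N : forall n, M n -> Prop) : Prop :=
  exists (r : nat) (deg : 'I_r -> nat) (x : forall i, M (deg i)),
    (forall i, N (deg i) (x i)) /\
    (forall m (y : M m), N m y -> generated_by x y).

Definition fg_module (k : pzRingType) (M : FSBop_module k) : Prop :=
  @fg_submodule k M (fun _ _ => True).

Definition is_left_ideal (k : pzRingType) (I : k -> Prop) : Prop :=
  [/\ I 0, (forall x y, I x -> I y -> I (x + y)) &
      (forall a x, I x -> I (a * x))].

Definition left_noetherian (k : pzRingType) : Prop :=
  forall I : k -> Prop, is_left_ideal I ->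
    exists (r : nat) (s : 'I_r -> k), (forall i, I (s i)) /\
      (forall y, I y -> exists c : 'I_r -> k, y = \sum_(i < r) c i * s i).

(* Main.v *)
Require Import Defs.
From mathcomp Require Import all_boot all_order all_algebra.
From mathcomp Require Import zify.
From Stdlib Require Import Classical ClassicalEpsilon.
Set Implicit Arguments. Unset Strict Implicit. Unset Printing Implicit Defensive.
Import GRing.Theory.

Definition dcF (A : Type) (a0 : A) (Good : (nat -> A) -> nat -> Prop)
  (s : nat -> A) (n : nat) : A :=
  match excluded_middle_informative
     (exists a, Good (fun j => if j == n then a else s j) n.+1) with
  | left H => proj1_sig (constructive_indefinite_description _ H)
  | right _ => a0 end.

Fixpoint dcT (A : Type) (a0 : A) (Good : (nat -> A) -> nat -> Prop) (n : nat) : nat -> A :=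
  match n with 0 => fun _ => a0
  | n'.+1 => fun j => if j == n' then dcF a0 Good (dcT a0 Good n') n' else dcT a0 Good n' j end.

Lemma dc (A : Type) (a0 : A) (Good : (nat -> A) -> nat -> Prop) :
  (forall s s' n, (forall j, j < n -> s j = s' j) -> Good s n -> Good s' n) ->
  Good (fun _ => a0) 0 ->
  (forall s n, Good s n -> exists a, Good (fun j => if j == n then a else s j) n.+1) ->
  exists S : nat -> A, forall n, Good S n.
Proof.
move=> Gext G0 Gstep.
have GT : forall n, Good (dcT a0 Good n) n.
  elim=> [//|n IH] /=.
  rewrite /dcF; case: excluded_middle_informative => [H'|[]]; last exact: Gstep.
  by case: constructive_indefinite_description.
exists (fun n => dcT a0 Good n.+1 n) => n.
apply: Gext (GT n) => j.
elim: n j => [//|n IH] j /=.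
rewrite ltnS leq_eqVlt; case: eqP => [-> _|_ /= /IH //].
by rewrite /= eqxx.
Qed.

Lemma min_ex (P : nat -> Prop) n : P n -> exists m, P m /\ forall m', m' < m -> ~ P m'.
Proof.
elim/ltn_ind: n => n IH Pn.
case: (classic (exists m', m' < n /\ P m')) => [[m' [lt Pm']]|H]; first exact: IH lt Pm'.
by exists n; split=> // m' lt Pm'; apply: H; exists m'.
Qed.

Lemma choice_nat (A : Type) (R : nat -> A -> Prop) :
  (forall n, exists a, R n a) -> exists g : nat -> A, forall n, R n (g n).
Proof.
move=> H; exists (fun n => proj1_sig (constructive_indefinite_description _ (H n))).
by move=> n; case: constructive_indefinite_description.
Qed.

Lemma choice_gen (T A : Type) (R : T -> A -> Prop) :
  (forall n, exists a, R n a) -> exists g : T -> A, forall n, R n (g n).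
Proof.
move=> H; exists (fun n => proj1_sig (constructive_indefinite_description _ (H n))).
by move=> n; case: constructive_indefinite_description.
Qed.

Lemma enum_inf (P : nat -> Prop) :
  (forall N, exists j, N <= j /\ P j) ->
  exists sg : nat -> nat, (forall k, P (sg k)) /\ (forall k, sg k < sg k.+1).
Proof.
move=> H; have [g Hg] := choice_nat H.
exists (fun k => iter k.+1 (fun j => g j.+1) 0).
split=> [k|k] /=; first exact: (Hg _).2.
exact: (Hg _).1.
Qed.

Lemma incr_mono (sg : nat -> nat) : (forall k, sg k < sg k.+1) ->
  forall i j, i < j -> sg i < sg j.
Proof.
move=> H i j; elim: j => // j IH; rewrite ltnS leq_eqVlt => /orP[/eqP->//|/IH].
by move=> lt; apply: ltn_trans lt (H j).
Qed.

Lemma incr_mono_le (sg : nat -> nat) : (forall k, sg k < sg k.+1) ->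
  forall i j, i <= j -> sg i <= sg j.
Proof.
move=> H i j; rewrite leq_eqVlt => /orP[/eqP->//|lt].
exact/ltnW/(incr_mono H).
Qed.

Lemma pigeon (T : finType) (f : nat -> T) : exists t, forall N, exists j, N <= j /\ f j = t.
Proof.
apply: NNPP => H.
have H' : forall t, exists N, forall j, N <= j -> f j <> t.
  move=> t; apply: NNPP => Ht; apply: H; exists t => N.
  apply: NNPP => HN; apply: Ht; exists N => j le E; apply: HN; by exists j.
have [Nf HN] := choice_gen H'.
pose B := (\max_(t : T) Nf t)%N.
by apply: (HN (f B) B) => //; apply: leq_bigmax.
Qed.

Definition bad (S : Type) (R : S -> S -> Prop) (w : nat -> S) :=
  forall i j, i < j -> ~ R (w i) (w j).

Lemma higman (S : finType) (w : nat -> seq S) :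
  exists i j, i < j /\ subseq (w i) (w j).
Proof.
apply: NNPP => Hbad.
have bw : bad (fun a b => subseq a b) w.
  by move=> i j lt sub; apply: Hbad; exists i, j.
pose ext (s : nat -> seq S) (j : nat) (v : seq S) :=
  exists w', bad (fun a b => subseq a b) w' /\ (forall l, l < j -> w' l = s l) /\ w' j = v.
pose Good (s : nat -> seq S) (n : nat) :=
  (exists w', bad (fun a b => subseq a b) w' /\ forall j, j < n -> w' j = s j) /\
  (forall j, j < n -> forall v, size v < size (s j) -> ~ ext s j v).
have [B GB] : exists B, forall n, Good B n.
  apply: (@dc _ [::] Good).
  - move=> s s' n E [[w' [b1 b2]] b3]; split.
      by exists w'; split=> // j lt; rewrite b2 // E.
    move=> j lt v; rewrite -E // => sz [w'' [e1 [e2 e3]]]; apply: (b3 j lt v sz).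
    by exists w''; split=> //; split=> // l lt'; rewrite e2 // E //; apply: ltn_trans lt.
  - by split=> //; exists w.
  - move=> s n [[w' [b1 b2]] b3].
    pose P m := exists w'', bad (fun a b => subseq a b) w'' /\
       (forall l, l < n -> w'' l = s l) /\ size (w'' n) = m.
    have [m [[w'' [c1 [c2 c3]]] Hmin]] : exists m, P m /\ forall m', m' < m -> ~ P m'.
      by apply: (@min_ex P (size (w' n))); exists w'.
    exists (w'' n); split.
      exists w''; split=> // j; rewrite ltnS leq_eqVlt => /orP[/eqP->|lt]; first by rewrite eqxx.
      by rewrite (ltn_eqF lt) c2.
    move=> j; rewrite ltnS leq_eqVlt => /orP[/eqP->|lt].
      rewrite eqxx => v sz [w3 [d1 [d2 d3]]]; apply: (Hmin (size v)); first by rewrite -c3.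
      exists w3; split=> //; split=> [l lt|]; last by rewrite d3.
      by rewrite d2 // (ltn_eqF lt).
    rewrite (ltn_eqF lt) => v sz [w3 [d1 [d2 d3]]]; apply: (b3 j lt v sz).
    exists w3; split=> //; split=> // l lt'; rewrite d2 //.
    by rewrite (ltn_eqF (ltn_trans lt' lt)).
have Bbad : bad (fun a b => subseq a b) B.
  move=> i j lt; have [[w' [b1 b2]] _] := GB j.+1.
  by rewrite -!b2 //; [apply: b1 | apply: ltn_trans lt _].
have Bne : forall j, B j <> [::].
  by move=> j E; apply: (Bbad j j.+1) => //; rewrite E sub0seq.
have [o Ho] := pigeon (fun j => ohead (B j)).
have [sg [Psg Isg]] := enum_inf Ho.
case: o Ho Psg => [a|] Ho Psg; last first.
  by have := Psg 0; case: (B (sg 0)) (Bne (sg 0)).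
have Ha : forall k, B (sg k) = a :: behead (B (sg k)).
  by move=> k; have := Psg k; case: (B (sg k)) (Bne (sg k)) => [|b t] //= _ [->].
pose w' j := if j < sg 0 then B j else behead (B (sg (j - sg 0))).
have [_ Hmin] := GB (sg 0).+1.
apply: (Hmin (sg 0) (ltnSn _) (w' (sg 0))).
  by rewrite /w' ltnn subnn [X in _ < size X]Ha.
exists w'; split; last by split=> [l lt|//]; rewrite /w' lt.
move=> i j lt; rewrite /w' /=.
case: (ltnP j (sg 0)) => hj.
  by rewrite (ltn_trans lt hj); apply: Bbad.
case: (ltnP i (sg 0)) => hi.
  move=> sub; apply: (Bbad i (sg (j - sg 0))).
    by apply: (leq_trans hi); apply: incr_mono_le.
  by apply: (subseq_trans sub); rewrite [X in subseq _ X]Ha subseq_cons.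
move=> sub; apply: (Bbad (sg (i - sg 0)) (sg (j - sg 0))).
  by apply: incr_mono => //; lia.
by rewrite Ha [X in subseq _ X]Ha /= eqxx.
Qed.

Lemma chain_sub (X : Type) (valid : X -> Prop) (le : X -> X -> Prop) :
 (forall u v w, le u v -> le v w -> le u w) ->
 (forall s : nat -> X, (forall n, valid (s n)) -> exists i j, i < j /\ le (s i) (s j)) ->
 forall u : nat -> X, (forall n, valid (u n)) ->
 exists rho : nat -> nat, (forall t, rho t < rho t.+1) /\
   (forall t s, t < s -> le (u (rho t)) (u (rho s))).
Proof.
move=> tr wqo u vu.
have [N HN] : exists N, forall n, N <= n -> exists n', n < n' /\ le (u n) (u n').
  apply: NNPP => H.
  have H' : forall N, exists j, N <= j /\ (forall n', j < n' -> ~ le (u j) (u n')).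
    move=> N; apply: NNPP => H2; apply: H; exists N => n le_n.
    apply: NNPP => H3; apply: H2; exists n; split=> // n' lt E; apply: H3; by exists n'.
  have [tau [Pt It]] := enum_inf H'.
  have [i [j [lt E]]] := wqo (fun t => u (tau t)) (fun t => vu _).
  by apply: (Pt i) E; apply: incr_mono.
have [g Hg] : exists g : nat -> nat, forall n, N <= n -> n < g n /\ le (u n) (u (g n)).
  apply: (@choice_nat nat (fun n m => N <= n -> n < m /\ le (u n) (u m))) => n.
  case: (leqP N n) => h.
    by have [n' [l1 l2]] := HN n h; exists n'.
  by exists 0.
pose rho t := iter t g N.
have rN : forall t, N <= rho t.
  elim=> [//|t IH] /=; exact: leq_trans IH (ltnW (Hg _ IH).1).
exists rho; split; first by move=> t; exact: (Hg _ (rN t)).1.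
move=> t s; elim: s => // s IH; rewrite ltnS leq_eqVlt => /orP[/eqP->|lt].
  exact: (Hg _ (rN s)).2.
exact: tr (IH lt) (Hg _ (rN s)).2.
Qed.

Lemma ord0_False (j : 'I_0) : False. Proof. by case: j. Qed.

Lemma fin_basis (k : pzRingType) (X : Type) (valid : X -> Prop)
  (le : X -> X -> Prop) (I : X -> k -> Prop) :
 left_noetherian k ->
 (forall u v w, le u v -> le v w -> le u w) ->
 (forall s : nat -> X, (forall n, valid (s n)) -> exists i j, i < j /\ le (s i) (s j)) ->
 (forall u, valid u -> is_left_ideal (I u)) ->
 exists (J : nat) (us : 'I_J -> X) (as_ : 'I_J -> k),
   (forall j, valid (us j) /\ I (us j) (as_ j)) /\
   forall v a, valid v -> I v a -> exists b : 'I_J -> k,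
      a = (\sum_(j < J) b j * as_ j)%R /\ forall j, b j != 0%R -> le (us j) v.
Proof.
move=> noeth tr wqo idl.
apply: NNPP => H.
have H' : forall J (us : 'I_J -> X) (as_ : 'I_J -> k),
   (forall j, valid (us j) /\ I (us j) (as_ j)) ->
   exists v a, valid v /\ I v a /\ ~ exists b : 'I_J -> k,
      a = (\sum_(j < J) b j * as_ j)%R /\ forall j, b j != 0%R -> le (us j) v.
  move=> J us as_ Hv; apply: NNPP => H2; apply: H; exists J, us, as_; split=> // v a vv Iv.
  apply: NNPP => H3; apply: H2; exists v, a; by split.
have [v0 [a0 _]] := H' 0 (fun j => False_rect _ (ord0_False j))
   (fun j => False_rect _ (ord0_False j)) (fun j => False_rect _ (ord0_False j)).
pose inspan (s : nat -> X * k) (j : nat) := exists b : 'I_j -> k,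
   (s j).2 = (\sum_(l < j) b l * (s l).2)%R /\ forall l : 'I_j, b l != 0%R -> le (s l).1 (s j).1.
pose Good (s : nat -> X * k) n := forall j, j < n ->
   valid (s j).1 /\ I (s j).1 (s j).2 /\ ~ inspan s j.
have [S GS] : exists S, forall n, Good S n.
  apply: (@dc _ (v0, a0) Good).
  - move=> s s' n E G j lt; have [g1 [g2 g3]] := G j lt; rewrite -!E //; split=> //; split=> //.
    move=> [b [b1 b2]]; apply: g3; exists b; split.
      rewrite E // b1; apply: eq_bigr => l _; rewrite E //; exact: ltn_trans (ltn_ord l) lt.
    by move=> l; rewrite !E //; [apply: b2 | exact: ltn_trans (ltn_ord l) lt].
  - by [].
  - move=> s n G.
    have [v [a [vv [Iv Hn]]]] := H' n (fun l => (s l).1) (fun l => (s l).2)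
       (fun l => let: conj g1 (conj g2 _) := G l (ltn_ord l) in conj g1 g2).
    exists (v, a) => j; rewrite ltnS leq_eqVlt => /orP[/eqP->|lt].
      rewrite eqxx /=; split=> //; split=> // [[b [b1 b2]]]; apply: Hn; exists b; split.
        move: b1; rewrite eqxx /= => ->; apply: eq_bigr => l _; by rewrite (ltn_eqF (ltn_ord l)).
      by move=> l /b2; rewrite (ltn_eqF (ltn_ord l)) eqxx.
    rewrite (ltn_eqF lt); have [g1 [g2 g3]] := G j lt; split=> //; split=> //.
    move=> [b [b1 b2]]; apply: g3; exists b; split.
      move: b1; rewrite (ltn_eqF lt) => ->; apply: eq_bigr => l _; by rewrite (ltn_eqF (ltn_trans (ltn_ord l) lt)).
    by move=> l /b2; rewrite (ltn_eqF (ltn_trans (ltn_ord l) lt)) (ltn_eqF lt).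
have [rho [Ir Cr]] := chain_sub tr wqo (fun n => (GS n.+1 n (ltnSn n)).1).
pose A t := (S (rho t)).2.
pose K s a := exists c : nat -> k, a = (\sum_(t < s.+1) c t * A t)%R.
have Kmono : forall s s' a, s <= s' -> K s a -> K s' a.
  move=> s s' a les [c ->]; exists (fun t => if t < s.+1 then c t else 0%R).
  rewrite (big_ord_widen_cond s'.+1 xpredT (fun t => c t * A t)%R) //.
  by rewrite big_mkcond /=; apply: eq_bigr => t _; case: ifP => //; rewrite mul0r.
have K0 : forall s, K s 0%R.
  by move=> s; exists (fun _ => 0%R); rewrite big1 // => t _; rewrite mul0r.
have KD : forall s a b, K s a -> K s b -> K s (a + b)%R.
  move=> s a b [c ->] [c' ->]; exists (fun t => c t + c' t)%R.
  by rewrite -big_split; apply: eq_bigr => t _; rewrite mulrDl.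
have KM : forall s x a, K s a -> K s (x * a)%R.
  move=> s x a [c ->]; exists (fun t => x * c t)%R.
  by rewrite mulr_sumr; apply: eq_bigr => t _; rewrite mulrA.
have Kin : forall s, K s (A s).
  move=> s; exists (fun t => if t == s then 1%R else 0%R).
  rewrite big_ord_recr /= eqxx mul1r big1 ?add0r // => t _.
  by rewrite (ltn_eqF (ltn_ord t)) mul0r.
have Knot : forall s, ~ K s (A s.+1).
  move=> s [c Ec].
  have j0 : 0 < rho s.+1 by apply: leq_ltn_trans (Ir s); exact: leq0n.
  pose p (t : 'I_s.+1) : 'I_(rho s.+1) := insubd (Ordinal j0) (rho t).
  have pv : forall t : 'I_s.+1, val (p t) = rho t.
    move=> t; rewrite /p val_insubd; case: ifP => // /negP []; apply: incr_mono => //.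
  have [_ [_ Hn]] := GS (rho s.+1).+1 (rho s.+1) (ltnSn _).
  apply: Hn; exists (fun l => \sum_(t < s.+1 | p t == l) c t)%R; split.
    rewrite -/(A s.+1) Ec (partition_big p xpredT) //=; apply: eq_bigr => l _.
    rewrite mulr_suml; apply: eq_bigr => t /eqP <-; by rewrite /A -pv.
  move=> l nz; have [t /eqP Ht] : exists t : 'I_s.+1, p t == l.
    apply: NNPP => Hx; move/negP: nz; apply; apply/eqP; rewrite big_pred0 // => t.
    by apply/negP => Et; apply: Hx; exists t.
  by rewrite -Ht pv; apply: Cr.
pose U a := exists s, K s a.
have UI : is_left_ideal U.
  split; first by exists 0.
    move=> a b [s Ka] [s' Kb]; exists (maxn s s'); apply: KD.
      by apply: Kmono Ka; rewrite leq_maxl.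
    by apply: Kmono Kb; rewrite leq_maxr.
  by move=> x a [s Ka]; exists s; apply: KM.
have [r [g [gU gsp]]] := noeth U UI.
have [sg Hsg] := choice_gen gU.
pose Sm := (\max_(i < r) sg i)%N.
have KSm : forall y, U y -> K Sm y.
  move=> y /gsp [c ->]; apply: (big_ind (K Sm)) => //; first exact: KD.
  move=> i _; apply: KM; apply: Kmono (Hsg i); exact: leq_bigmax.
by apply: (Knot Sm); apply: KSm; exists Sm.+1; apply: Kin.
Qed.

Lemma ltn_val n (u : 'I_n) : nat_of_ord u < n. Proof. exact: ltn_ord. Qed.
Lemma cen_lt m : m < 2 * m + 1. Proof. lia. Qed.
Definition cen (m : nat) : obj m := Ordinal (cen_lt m).
Definition posn (m q : nat) : obj m := insubd (cen m) (m + q.+1).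
Definition absv (x v : nat) := if x <= v then v - x else x - v.

Lemma val_cen m : nat_of_ord (cen m) = m. Proof. by []. Qed.
Lemma val_posn m q : q < m -> nat_of_ord (posn m q) = m + q.+1.
Proof. move=> h; rewrite /posn val_insubd; case: ifP => //; lia. Qed.
Lemma val_sigma m (u : obj m) : nat_of_ord (sigmaB u) = 2 * m - nat_of_ord u.
Proof. rewrite /sigmaB /=; have := ltn_ord u; lia. Qed.
Lemma val_obj m (u : obj m) : nat_of_ord u <= 2 * m.
Proof. have := ltn_val u; lia. Qed.

Lemma obj_cases m (u : obj m) :
  u = cen m \/ (exists2 q, q < m & u = posn m q) \/ (exists2 q, q < m & u = sigmaB (posn m q)).
Proof.
have := val_obj u; case: (ltngtP (nat_of_ord u) m) => h hu.
- right; right; exists (m - (nat_of_ord u).+1); first lia.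
  apply: ord_inj; rewrite val_sigma val_posn; lia.
- right; left; exists (nat_of_ord u - m.+1); first lia.
  apply: ord_inj; rewrite val_posn; lia.
- by left; apply: ord_inj.
Qed.

Lemma mor_eqv n x (f : {ffun obj n -> obj x}) : is_mor f -> forall u, f (sigmaB u) = sigmaB (f u).
Proof. by case/andP => /forallP H _ u; apply/eqP. Qed.
Lemma mor_surj n x (f : {ffun obj n -> obj x}) : is_mor f -> forall v, exists u, f u = v.
Proof. by case/andP => _ /forallP H v; have /existsP [u /eqP] := H v; exists u. Qed.
Lemma mor_val_sigma n x (f : {ffun obj n -> obj x}) : is_mor f -> forall u,
  nat_of_ord (f (sigmaB u)) = 2 * x - nat_of_ord (f u).
Proof. by move=> H u; rewrite mor_eqv // val_sigma. Qed.
Lemma mor_cen n x (f : {ffun obj n -> obj x}) : is_mor f -> f (cen n) = cen x.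
Proof.
move=> H; apply: ord_inj; have := mor_val_sigma H (cen n).
have -> : sigmaB (cen n) = cen n by apply: ord_inj; rewrite val_sigma /=; lia.
have := val_obj (f (cen n)); rewrite /=; lia.
Qed.
Lemma abs_sigma x (v : obj x) : absv x (nat_of_ord (sigmaB v)) = absv x (nat_of_ord v).
Proof. rewrite val_sigma /absv; have := val_obj v; case: ifP; case: ifP; lia. Qed.
Lemma abs_posn x q : q < x -> absv x (nat_of_ord (posn x q)) = q.+1.
Proof. move=> h; rewrite val_posn // /absv; case: ifP; lia. Qed.
Lemma abs_cen x : absv x (nat_of_ord (cen x)) = 0.
Proof. by rewrite /absv /= leqnn subnn. Qed.

Lemma comp_is_mor n m p (f : {ffun obj n -> obj m}) (g : {ffun obj m -> obj p}) :
  is_mor f -> is_mor g -> is_mor (comp_mor g f).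
Proof.
move=> Hf Hg; apply/andP; split.
  by apply/forallP => u; rewrite !ffunE !mor_eqv.
apply/forallP => w; have [v <-] := mor_surj Hg w; have [u <-] := mor_surj Hf v.
by apply/existsP; exists u; rewrite ffunE.
Qed.

Lemma mor_det m x x' (f : {ffun obj m -> obj x}) (f' : {ffun obj m -> obj x'}) :
  x = x' -> is_mor f -> is_mor f' ->
  (forall q, q < m -> nat_of_ord (f (posn m q)) = nat_of_ord (f' (posn m q))) ->
  forall u, nat_of_ord (f u) = nat_of_ord (f' u).
Proof.
move=> ex Hf Hf' E u; case: (obj_cases u) => [->|[[q lq ->]|[q lq ->]]].
- by rewrite !mor_cen.
- exact: E.
- by rewrite !mor_val_sigma // E // ex.
Qed.

Lemma abs_small n (u : obj n) q : absv n (nat_of_ord u) <= q ->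
  u = cen n \/ exists q', [/\ q' < q, q' < n & (u = posn n q' \/ u = sigmaB (posn n q'))].
Proof.
case: (obj_cases u) => [->|[[q' lq ->]|[q' lq ->]]]; first by left.
- by rewrite abs_posn // => h; right; exists q'; split=> //; left.
- by rewrite abs_sigma abs_posn // => h; right; exists q'; split=> //; right.
Qed.

Definition ordered (p n : nat) (phi : {ffun obj p -> obj n}) : Prop :=
  forall q, q < n -> exists t, [/\ t < p, phi (posn p t) = posn n q &
     forall t', t' < t -> absv n (nat_of_ord (phi (posn p t'))) <= q].

Definition OS (p n : nat) (phi : {ffun obj p -> obj n}) : Prop := is_mor phi /\ ordered phi.

Lemma OS_comp a b c (psi : {ffun obj a -> obj b}) (phi : {ffun obj b -> obj c}) :
  OS psi -> OS phi -> OS (comp_mor phi psi).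
Proof.
move=> [Mpsi Opsi] [Mphi Ophi]; split; first exact: comp_is_mor.
move=> q lq; have [t [lt Et Ht]] := Ophi q lq.
have [s [ls Es Hs]] := Opsi t lt.
exists s; split=> //; first by rewrite ffunE Es.
move=> s' lt'; rewrite ffunE.
case: (abs_small (Hs s' lt')) => [->|[q' [l1 l2 [->|->]]]].
- by rewrite mor_cen // abs_cen.
- exact: Ht.
- rewrite mor_eqv // abs_sigma; exact: Ht.
Qed.

Definition lexlt m x x' (f : {ffun obj m -> obj x}) (f' : {ffun obj m -> obj x'}) : bool :=
 [exists t : 'I_m, (nat_of_ord (f (posn m t)) < nat_of_ord (f' (posn m t))) &&
    [forall t' : 'I_m, (t' < t) ==> (nat_of_ord (f (posn m t')) == nat_of_ord (f' (posn m t')))]].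

Lemma lexltP m x x' (f : {ffun obj m -> obj x}) (f' : {ffun obj m -> obj x'}) :
  reflect (exists t, [/\ t < m, nat_of_ord (f (posn m t)) < nat_of_ord (f' (posn m t)) &
      forall t', t' < t -> nat_of_ord (f (posn m t')) = nat_of_ord (f' (posn m t'))]) (lexlt f f').
Proof.
apply: (iffP existsP) => [[t /andP[h1 /forallP h2]]|[t [lt h1 h2]]].
  exists t; split=> // t' lt'.
  have lm : t' < m by apply: ltn_trans lt' (ltn_ord t).
  by have /implyP /(_ lt') /eqP := h2 (Ordinal lm).
exists (Ordinal lt); rewrite /= h1 /=; apply/forallP => t'; apply/implyP => lt'.
by apply/eqP; apply: h2.
Qed.

Lemma lexlt_irr m x (f : {ffun obj m -> obj x}) : ~~ lexlt f f.
Proof. by apply/lexltP => [[t [_ h _]]]; rewrite ltnn in h. Qed.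

Lemma lexlt_trans m x x' x'' (f : {ffun obj m -> obj x}) (f' : {ffun obj m -> obj x'})
  (f'' : {ffun obj m -> obj x''}) : lexlt f f' -> lexlt f' f'' -> lexlt f f''.
Proof.
move=> /lexltP [t [lt h1 h2]] /lexltP [t' [lt' h1' h2']]; apply/lexltP.
case: (ltngtP t t') => c.
- exists t; split=> //; first by rewrite -(h2' t c).
  by move=> s ls; rewrite h2 // h2' //; apply: ltn_trans ls c.
- exists t'; split=> //; first by rewrite (h2 t' c).
  by move=> s ls; rewrite h2 ?h2' //; apply: ltn_trans ls c.
- subst t'; exists t; split=> //; first exact: ltn_trans h1 h1'.
  by move=> s ls; rewrite h2 ?h2'.
Qed.

Lemma lexlt_total m x x' (f : {ffun obj m -> obj x}) (f' : {ffun obj m -> obj x'}) :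
  x = x' -> is_mor f -> is_mor f' -> (exists u, nat_of_ord (f u) <> nat_of_ord (f' u)) ->
  lexlt f f' \/ lexlt f' f.
Proof.
move=> ex Hf Hf' [u Hu].
have ex1 : exists q, (q < m) && (nat_of_ord (f (posn m q)) != nat_of_ord (f' (posn m q))).
  apply: NNPP => H; apply: Hu; apply: (mor_det ex Hf Hf') => q lq.
  apply/eqP; apply: negbNE; apply/negP => nq; apply: H; exists q; by rewrite lq.
case: (ex_minnP ex1) => t /andP[lt ne] Hmin.
have Heq : forall t', t' < t -> nat_of_ord (f (posn m t')) = nat_of_ord (f' (posn m t')).
  move=> t' lt'; apply/eqP; apply: negbNE; apply/negP => nq.
  have := Hmin t'; rewrite (ltn_trans lt' lt) nq => /(_ isT); lia.
case: (ltngtP (nat_of_ord (f (posn m t))) (nat_of_ord (f' (posn m t)))) => c.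
- by left; apply/lexltP; exists t.
- by right; apply/lexltP; exists t; split=> // t' lt'; rewrite Heq.
- by rewrite c eqxx in ne.
Qed.

Lemma lexlt_comp p m x x' (f : {ffun obj m -> obj x}) (f' : {ffun obj m -> obj x'})
  (phi : {ffun obj p -> obj m}) :
  x = x' -> is_mor f -> is_mor f' -> OS phi -> lexlt f f' ->
  lexlt (comp_mor f phi) (comp_mor f' phi).
Proof.
move=> ex Hf Hf' [Mphi Ophi] /lexltP [t [lt h1 h2]].
have [t0 [lt0 E0 H0]] := Ophi t lt.
apply/lexltP; exists t0; split=> //; first by rewrite !ffunE E0.
move=> t' lt'; rewrite !ffunE.
case: (abs_small (H0 t' lt')) => [->|[q' [l1 l2 [->|->]]]].
- by rewrite !mor_cen.
- exact: h2.
- by rewrite !mor_val_sigma // h2 // ex.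
Qed.

Lemma comp_inj p m x x' (f : {ffun obj m -> obj x}) (f' : {ffun obj m -> obj x'})
  (phi : {ffun obj p -> obj m}) : is_mor phi ->
  (forall u, nat_of_ord (comp_mor f phi u) = nat_of_ord (comp_mor f' phi u)) ->
  forall v, nat_of_ord (f v) = nat_of_ord (f' v).
Proof. move=> H E v; have [u <-] := mor_surj H v; by have := E u; rewrite !ffunE. Qed.

Definition firstb m x (f : {ffun obj m -> obj x}) (q : nat) : bool :=
  (absv x (f (posn m q)) != 0) &&
  all (fun q' => absv x (f (posn m q')) != absv x (f (posn m q))) (iota 0 q).

Lemma firstbP m x (f : {ffun obj m -> obj x}) q :
  reflect (absv x (f (posn m q)) <> 0 /\
    forall q', q' < q -> absv x (f (posn m q')) <> absv x (f (posn m q))) (firstb f q).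
Proof.
apply: (iffP andP) => [[/eqP h /allP h2]|[h h2]]; split=> //.
- by move=> q' lt; apply/eqP; apply: h2; rewrite mem_iota.
- by apply/eqP.
- by apply/allP => q'; rewrite mem_iota add0n => /andP[_ lt]; apply/eqP; apply: h2.
Qed.

Lemma sigma_inv m (u : obj m) : sigmaB (sigmaB u) = u.
Proof. apply: ord_inj; rewrite !val_sigma; have := val_obj u; lia. Qed.

Lemma abs_le x (v : obj x) : absv x v <= x.
Proof. rewrite /absv; have := val_obj v; case: ifP; lia. Qed.

Lemma abs_eq_cases x (a b : obj x) : absv x a = absv x b ->
  nat_of_ord a = b \/ nat_of_ord a = 2 * x - b.
Proof. rewrite /absv; have := val_obj a; have := val_obj b; case: ifP; case: ifP; lia. Qed.

Lemma abs0_cen x (a : obj x) : absv x a = 0 -> nat_of_ord a = x.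
Proof. rewrite /absv; have := val_obj a; case: ifP; lia. Qed.

Lemma exists_abs n x (f : {ffun obj n -> obj x}) j : is_mor f -> 0 < j -> j <= x ->
  exists q, (q < n) && (absv x (f (posn n q)) == j).
Proof.
move=> Hf j0 jx; have [u Hu] := mor_surj Hf (posn x j.-1).
have aj : absv x (posn x j.-1) = j by rewrite abs_posn; lia.
case: (obj_cases u) => [E|[[q lq E]|[q lq E]]]; subst u.
- by move: aj; rewrite -Hu mor_cen // abs_cen; lia.
- by exists q; rewrite lq Hu aj eqxx.
- by exists q; rewrite lq -aj -Hu mor_eqv // abs_sigma eqxx.
Qed.

Definition phi_pos n p x (f : {ffun obj n -> obj x}) (g : {ffun obj p -> obj x})
  (e : nat -> nat) (t : nat) : obj n :=
  match [pick q : 'I_n | e q == t] with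
  | Some q => posn n q
  | None => if absv x (g (posn p t)) == 0 then cen n else
     match [pick q : 'I_n | firstb f q && (absv x (f (posn n q)) == absv x (g (posn p t)))] with
     | Some q0 => if nat_of_ord (g (posn p t)) == f (posn n q0) then posn n q0
                  else sigmaB (posn n q0)
     | None => cen n end end.

Definition phi_of n p x (f : {ffun obj n -> obj x}) (g : {ffun obj p -> obj x})
  (e : nat -> nat) : {ffun obj p -> obj n} :=
  [ffun u : obj p => if p < u then phi_pos f g e (u - p.+1)
     else if nat_of_ord u == p then cen n else sigmaB (phi_pos f g e (p - u.+1))].

Lemma build_phi n p x (f : {ffun obj n -> obj x}) (g : {ffun obj p -> obj x}) (e : nat -> nat) :
 is_mor f -> is_mor g ->
 (forall q, q < n -> e q < p) -> (forall q q', q < q' -> q' < n -> e q < e q') ->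
 (forall q, q < n -> nat_of_ord (g (posn p (e q))) = f (posn n q) /\ firstb g (e q) = firstb f q) ->
 exists phi : {ffun obj p -> obj n}, OS phi /\ forall u, nat_of_ord (g u) = comp_mor f phi u.
Proof.
move=> Hf Hg ep em el.
have emle : forall q q', q <= q' -> q' < n -> e q <= e q'.
  move=> q q'; rewrite leq_eqVlt => /orP[/eqP->//|lt] ln; exact/ltnW/em.
have einj : forall q q', q < n -> q' < n -> e q = e q' -> q = q'.
  move=> q q' lq lq' E; case: (ltngtP q q') => // c.
  - by have := em _ _ c lq'; rewrite E ltnn.
  - by have := em _ _ c lq; rewrite E ltnn.
pose pp := phi_pos f g e.
have P1 : forall t, t < p -> nat_of_ord (g (posn p t)) = f (pp t).
  move=> t lt; rewrite /pp /phi_pos; case: pickP => [q /eqP Eq|Hnone].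
    by rewrite -Eq (el q (ltn_ord q)).1.
  case: eqP => [/abs0_cen ->|nz]; first by rewrite mor_cen.
  case: pickP => [q0 /andP[_ /eqP A]|Hn2].
    case: eqP => // ne; rewrite mor_val_sigma //.
    by case: (abs_eq_cases A) => h; have := val_obj (g (posn p t)); have := val_obj (f (posn n q0)); lia.
  exfalso; have ex := exists_abs Hf (j := absv x (g (posn p t))) ltac:(lia) (abs_le _).
  case: (ex_minnP ex) => q /andP[lq /eqP Aq] Hmin.
  have := Hn2 (Ordinal lq); rewrite /= Aq eqxx andbT => /negP; apply.
  apply/firstbP; split; first by rewrite Aq.
  move=> q' lt' E; have := Hmin q'; rewrite (ltn_trans lt' lq) E Aq eqxx => /(_ isT).
  by rewrite leqNgt lt'.
have P2 : forall q, q < n -> pp (e q) = posn n q.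
  move=> q lq; rewrite /pp /phi_pos; case: pickP => [q' /eqP E|H].
    by rewrite (einj _ _ (ltn_ord q') lq E).
  by have := H (Ordinal lq); rewrite /= eqxx.
have P3 : forall q t, q < n -> t < e q -> absv n (pp t) <= q.
  move=> q t lq lt; rewrite /pp /phi_pos; case: pickP => [q' /eqP E|Hnone].
    rewrite abs_posn //; case: (ltnP q' q) => // c.
    by have := emle _ _ c (ltn_ord q'); rewrite E; lia.
  case: eqP => [_|nz]; first by rewrite abs_cen.
  case: pickP => [q0 /andP[F0 /eqP A]|_]; last by rewrite abs_cen.
  have lt0 : e q0 < t.
    have [g1 g2] := el q0 (ltn_ord q0).
    have /firstbP [_ Hfg] : firstb g (e q0) by rewrite g2.
    have Ag : absv x (g (posn p (e q0))) = absv x (g (posn p t)) by rewrite g1 A.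
    case: (ltngtP (e q0) t) => // c.
    - by exfalso; apply: (Hfg t c); rewrite Ag.
    - by exfalso; have := Hnone q0; rewrite /= c eqxx.
  have lq0 : q0 < q.
    by case: (ltnP q0 q) => // c; have := emle _ _ c (ltn_ord q0); lia.
  by case: eqP => _; rewrite ?abs_sigma abs_posn.
pose phi := phi_of f g e.
have Q0 : forall t, t < p -> phi (posn p t) = pp t.
  move=> t lt; rewrite /phi /phi_of ffunE val_posn // ifT; last by lia.
  by have -> : p + t.+1 - p.+1 = t by lia.
have Q1 : phi (cen p) = cen n.
  by rewrite /phi /phi_of ffunE /= ltnn eqxx.
have Q2 : forall t, t < p -> phi (sigmaB (posn p t)) = sigmaB (pp t).
  move=> t lt; rewrite /phi /phi_of ffunE val_sigma val_posn // ifF; last by lia.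
  rewrite ifF; last by apply/eqP; lia.
  by have -> : p - (2 * p - (p + t.+1)).+1 = t by lia.
have sc : forall m, sigmaB (cen m) = cen m.
  by move=> m; apply: ord_inj; rewrite val_sigma /=; lia.
exists phi; split; first split.
- apply/andP; split.
    apply/forallP => u; apply/eqP.
    case: (obj_cases u) => [->|[[t lt ->]|[t lt ->]]].
    + by rewrite sc Q1 sc.
    + by rewrite Q2 // Q0.
    + by rewrite sigma_inv Q0 // Q2 // sigma_inv.
  apply/forallP => v; apply/existsP.
  case: (obj_cases v) => [->|[[q lq ->]|[q lq ->]]].
  + by exists (cen p); rewrite Q1.
  + by exists (posn p (e q)); rewrite Q0 ?ep // P2.
  + by exists (sigmaB (posn p (e q))); rewrite Q2 ?ep // P2.
- move=> q lq; exists (e q); split; [exact: ep | by rewrite Q0 ?ep // P2|].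
  move=> t' lt'; rewrite Q0; last by apply: ltn_trans lt' (ep _ lq).
  exact: P3 lq lt'.
- move=> u; rewrite ffunE.
  case: (obj_cases u) => [->|[[t lt ->]|[t lt ->]]].
  + by rewrite Q1 !mor_cen.
  + by rewrite Q0 // P1.
  + by rewrite Q2 // !mor_val_sigma // P1.
Qed.

Definition Mon (r : nat) (deg : 'I_r -> nat) (m : nat) : finType :=
  {i : 'I_r & {ffun obj m -> obj (deg i)}}.

Definition morM r (deg : 'I_r -> nat) m (mu : Mon deg m) : bool := is_mor (tagged mu).

Definition compM r (deg : 'I_r -> nat) m p (mu : Mon deg m) (phi : {ffun obj p -> obj m}) : Mon deg p :=
  Tagged (fun i => {ffun obj p -> obj (deg i)}) (comp_mor (tagged mu) phi).

Definition ltM r (deg : 'I_r -> nat) m (mu nu : Mon deg m) : bool :=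
  (tag mu < tag nu) || ((tag mu == tag nu) && lexlt (tagged mu) (tagged nu)).

Lemma monE r (deg : 'I_r -> nat) m (mu nu : Mon deg m) : tag mu = tag nu ->
  (forall w, nat_of_ord (tagged mu w) = tagged nu w) -> mu = nu.
Proof.
case: mu => i f; case: nu => i' f' /= E; subst i' => H.
by congr Tagged; apply/ffunP => w; apply: ord_inj; exact: H.
Qed.

Lemma compM_comp r (deg : 'I_r -> nat) m p a (mu : Mon deg m) (phi : {ffun obj p -> obj m})
  (psi : {ffun obj a -> obj p}) : compM (compM mu phi) psi = compM mu (comp_mor phi psi).
Proof. by apply: monE => //= w; rewrite !ffunE. Qed.

Lemma compM_mor r (deg : 'I_r -> nat) m p (mu : Mon deg m) (phi : {ffun obj p -> obj m}) :
  morM mu -> is_mor phi -> morM (compM mu phi).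
Proof. by move=> H1 H2; apply: comp_is_mor. Qed.

Lemma ltM_irr r (deg : 'I_r -> nat) m (mu : Mon deg m) : ~~ ltM mu mu.
Proof. by rewrite /ltM ltnn eqxx /= lexlt_irr. Qed.

Lemma ltM_trans r (deg : 'I_r -> nat) m (mu nu xi : Mon deg m) :
  ltM mu nu -> ltM nu xi -> ltM mu xi.
Proof.
rewrite /ltM => /orP[h1|/andP[/eqP e1 h1]] /orP[h2|/andP[/eqP e2 h2]].
- by rewrite (ltn_trans h1 h2).
- by apply/orP; left; rewrite -e2.
- by apply/orP; left; rewrite e1.
- by apply/orP; right; rewrite (lexlt_trans h1 h2) andbT e1 e2.
Qed.

Lemma ltM_total r (deg : 'I_r -> nat) m (mu nu : Mon deg m) :
  morM mu -> morM nu -> mu <> nu -> ltM mu nu \/ ltM nu mu.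
Proof.
move=> H1 H2 ne; rewrite /ltM.
case: (ltngtP (tag mu) (tag nu)) => c; [by left|by right|].
have ct : tag mu = tag nu by apply: ord_inj.
rewrite (introT eqP ct) (introT eqP (esym ct)) /=.
apply: lexlt_total => //; first by rewrite ct.
apply: NNPP => H; apply: ne; apply: monE => // w.
by apply: NNPP => H'; apply: H; exists w.
Qed.

Lemma ltM_comp r (deg : 'I_r -> nat) m p (mu nu : Mon deg m) (phi : {ffun obj p -> obj m}) :
  OS phi -> morM mu -> morM nu -> ltM mu nu -> ltM (compM mu phi) (compM nu phi).
Proof.
move=> Hphi H1 H2; rewrite /ltM /= => /orP[->//|/andP[/eqP e h]].
rewrite (introT eqP e) /=; apply/orP; right; apply: lexlt_comp => //; by rewrite e.
Qed.

Lemma compM_inj r (deg : 'I_r -> nat) m p (mu nu : Mon deg m) (phi : {ffun obj p -> obj m}) :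
  is_mor phi -> compM mu phi = compM nu phi -> mu = nu.
Proof.
move=> H E; apply: monE; first exact: (congr1 (fun z => tag z) E).
apply: (comp_inj H) => u.
exact: (congr1 (fun z : Mon deg p => nat_of_ord (tagged z u)) E).
Qed.

Definition XM r (deg : 'I_r -> nat) := {m : nat & Mon deg m}.
Definition validX r (deg : 'I_r -> nat) (u : XM deg) : Prop := morM (tagged u).
Definition dvdX r (deg : 'I_r -> nat) (u v : XM deg) : Prop :=
  exists phi : {ffun obj (tag v) -> obj (tag u)}, OS phi /\ tagged v = compM (tagged u) phi.

Lemma dvdX_trans r (deg : 'I_r -> nat) (u v w : XM deg) : dvdX u v -> dvdX v w -> dvdX u w.
Proof.
move=> [phi [O1 E1]] [psi [O2 E2]]; exists (comp_mor phi psi); split.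
  exact: OS_comp.
by rewrite E2 E1 compM_comp.
Qed.

Lemma subseq_emb (T : eqType) (d : T) (s1 s2 : seq T) : subseq s1 s2 ->
  exists e : nat -> nat, (forall q, q < size s1 -> e q < size s2 /\ nth d s1 q = nth d s2 (e q)) /\
    (forall q q', q < q' -> q' < size s1 -> e q < e q').
Proof.
elim: s2 s1 => [|y s2 IH] [|x s1] //=.
- by move=> _; exists id.
- by move=> _; exists id.
case: eqP => [<-|ne] H.
  have [e [e1 e2]] := IH _ H.
  exists (fun q => if q is q'.+1 then (e q').+1 else 0); split.
    by case=> [//|q] /= lq; have [h1 h2] := e1 q lq; split.
  move=> [|q] [|q'] //=; rewrite !ltnS => lt lt'; exact: e2.
have [e [e1 e2]] := IH _ H.
exists (fun q => (e q).+1); split.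
  by move=> q lq; have [h1 h2] := e1 q lq; split.
by move=> q q' lt lt'; rewrite ltnS; apply: e2.
Qed.

Lemma val_lt_K x (v : obj x) K : 2 * x <= K -> nat_of_ord v < K.+1.
Proof. by have := val_obj v; lia. Qed.

Definition Kb r (deg : 'I_r -> nat) : nat := (\max_(i < r) (2 * deg i))%N.

Definition letter r (deg : 'I_r -> nat) m (mu : Mon deg m) (q : nat) :
  ('I_r + ('I_(Kb deg).+1 * bool))%type :=
  inr (inord (nat_of_ord (tagged mu (posn m q))), firstb (tagged mu) q).

Definition word r (deg : 'I_r -> nat) (u : XM deg) : seq ('I_r + ('I_(Kb deg).+1 * bool))%type :=
  inl (tag (tagged u)) :: [seq letter (tagged u) q | q <- iota 0 (tag u)].

Lemma word_dvd r (deg : 'I_r -> nat) (u v : XM deg) : validX u -> validX v ->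
  subseq (word u) (word v) -> dvdX u v.
Proof.
case: u => n [i f]; case: v => p [i' g]; rewrite /validX /morM /word /= => Hf Hg.
case: eqP => [[E]|ne]; last first.
  move/mem_subseq => /(_ (inl i)); rewrite mem_head => /(_ isT) /mapP [q _] /=.
  by rewrite /letter.
subst i' => /(subseq_emb (inl i)) [e [e1 e2]].
move: e1 e2; rewrite !size_map !size_iota => e1 e2.
have Kle : 2 * deg i <= Kb deg by rewrite /Kb; apply: leq_bigmax.
have [phi [Ophi Ephi]] : exists phi : {ffun obj p -> obj n},
    OS phi /\ forall u, nat_of_ord (g u) = comp_mor f phi u.
  apply: (build_phi Hf Hg (e := e)).
  - by move=> q lq; have [h _] := e1 q lq.
  - by move=> q q' lt lt'; apply: e2.
  - move=> q lq; have [h1 h2] := e1 q lq.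
    move: h2; rewrite !(nth_map 0) ?size_iota // !nth_iota // !add0n /letter /=.
    case=> E1 E2; split=> //.
    have := congr1 (@nat_of_ord _) E1; rewrite !inordK //.
    + exact: val_lt_K.
    + exact: val_lt_K.
exists phi; split=> //=.
by apply: monE => //= w; rewrite Ephi.
Qed.

Lemma wqoX r (deg : 'I_r -> nat) (s : nat -> XM deg) : (forall n, validX (s n)) ->
  exists i j, i < j /\ dvdX (s i) (s j).
Proof.
move=> H; have [i [j [lt sub]]] := higman (fun n => word (s n)).
by exists i, j; split=> //; apply: word_dvd.
Qed.

Local Open Scope ring_scope.

Lemma act0 (k : pzRingType) (M : FSBop_module k) n m (f : {ffun obj n -> obj m}) :
  is_mor f -> act M f 0 = 0.
Proof.
move=> H; have := @act_add _ M _ _ f 0 0 H; rewrite addr0 => /eqP.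
by rewrite -subr_eq subrr eq_sym => /eqP.
Qed.

Lemma act_sum (k : pzRingType) (M : FSBop_module k) n m (f : {ffun obj n -> obj m})
  (I : Type) (s : seq I) (P : pred I) (F : I -> M m) :
  is_mor f -> act M f (\sum_(i <- s | P i) F i) = \sum_(i <- s | P i) act M f (F i).
Proof.
move=> H; apply: (big_morph (act M f)) => [a b|]; first exact: act_add.
exact: act0.
Qed.

Definition Phi (k : pzRingType) (M : FSBop_module k) r (deg : 'I_r -> nat)
  (x : forall i, M (deg i)) m (c : Mon deg m -> k) : M m :=
  \sum_(mu : Mon deg m | morM mu) c mu *: act M (tagged mu) (x (tag mu)).
Arguments Phi {k} M {r deg} x {m} c.

Definition pb r (deg : 'I_r -> nat) (k : pzRingType) m p (phi : {ffun obj p -> obj m})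
  (c : Mon deg m -> k) : Mon deg p -> k :=
  fun nu => \sum_(mu : Mon deg m | morM mu && (compM mu phi == nu)) c mu.

Lemma Phi_pb (k : pzRingType) (M : FSBop_module k) r (deg : 'I_r -> nat)
  (x : forall i, M (deg i)) m p (phi : {ffun obj p -> obj m}) (c : Mon deg m -> k) :
  is_mor phi -> Phi M x (pb phi c) = act M phi (Phi M x c).
Proof.
move=> H; rewrite /Phi act_sum //.
under [RHS]eq_bigr => mu Hmu do rewrite act_scale // -act_comp //.
rewrite (partition_big (fun mu => compM mu phi) (fun nu => morM nu)); last first.
  by move=> mu Hmu; apply: compM_mor.
apply: eq_bigr => nu Hnu; rewrite /pb scaler_suml; apply: eq_bigr => mu /andP[_ /eqP <-].
by [].
Qed.

Lemma Phi0 (k : pzRingType) (M : FSBop_module k) r (deg : 'I_r -> nat)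
  (x : forall i, M (deg i)) m : Phi M x (fun _ : Mon deg m => 0) = 0.
Proof. by rewrite /Phi big1 // => mu _; rewrite scale0r. Qed.

Lemma Phi_lin (k : pzRingType) (M : FSBop_module k) r (deg : 'I_r -> nat)
  (x : forall i, M (deg i)) m (c : Mon deg m -> k) J (b : 'I_J -> k) (W : 'I_J -> Mon deg m -> k) :
  Phi M x (fun mu => c mu - \sum_(j < J) b j * W j mu) =
  Phi M x c - \sum_(j < J) b j *: Phi M x (W j).
Proof.
rewrite /Phi.
have -> : \sum_(j < J) b j *: (\sum_(mu : Mon deg m | morM mu) W j mu *: act M (tagged mu) (x (tag mu))) =
   \sum_(mu : Mon deg m | morM mu) (\sum_(j < J) b j * W j mu) *: act M (tagged mu) (x (tag mu)).
  under eq_bigr do rewrite scaler_sumr.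
  rewrite exchange_big; apply: eq_bigr => mu _; rewrite scaler_suml.
  by apply: eq_bigr => j _; rewrite scalerA.
by rewrite -sumrB; apply: eq_bigr => mu _; rewrite scalerBl.
Qed.

Definition za r (deg : 'I_r -> nat) (k : pzRingType) m (mu0 : Mon deg m) (c : Mon deg m -> k) :=
  forall mu, morM mu -> ltM mu0 mu -> c mu = 0.

Lemma pb_top r (deg : 'I_r -> nat) (k : pzRingType) m p (phi : {ffun obj p -> obj m})
  (mu0 : Mon deg m) (c : Mon deg m -> k) : OS phi -> morM mu0 -> za mu0 c ->
  za (compM mu0 phi) (pb phi c) /\ pb phi c (compM mu0 phi) = c mu0.
Proof.
move=> [Mphi Ophi] H0 Hz; split.
  move=> nu Hnu lt; rewrite /pb big1 // => mu /andP[Hmu /eqP E].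
  case: (eqVneq mu mu0) => [Em|ne].
    by move: lt; rewrite -E Em (negbTE (ltM_irr _)).
  case: (ltM_total Hmu H0 (elimN eqP ne)) => h; last exact: Hz.
  have h' := ltM_comp (conj Mphi Ophi) Hmu H0 h.
  by move: (ltM_trans h' lt); rewrite E (negbTE (ltM_irr _)).
rewrite /pb (bigD1 mu0) /=; last by rewrite H0 eqxx.
rewrite big1 ?addr0 // => mu /andP[/andP[Hmu /eqP E] ne].
by rewrite (compM_inj Mphi E) eqxx in ne.
Qed.

Definition rank r (deg : 'I_r -> nat) m (mu : Mon deg m) : nat :=
  #|[pred nu : Mon deg m | morM nu && ltM nu mu]|.

Lemma rank_lt r (deg : 'I_r -> nat) m (mu nu : Mon deg m) :
  morM mu -> ltM mu nu -> (rank mu < rank nu)%N.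
Proof.
move=> Hmu lt; apply: proper_card; apply/properP; split.
  apply/subsetP => z; rewrite !inE => /andP[Hz lz]; by rewrite Hz (ltM_trans lz lt).
by exists mu; rewrite !inE ?Hmu ?lt ?(negbTE (ltM_irr _)).
Qed.

Lemma sum_sig (k : pzRingType) (M : FSBop_module k) r (deg : 'I_r -> nat) m
  (F : forall i : 'I_r, {ffun obj m -> obj (deg i)} -> M m) :
  \sum_(i < r) \sum_(f : {ffun obj m -> obj (deg i)} | is_mor f) F i f =
  \sum_(mu : Mon deg m | morM mu) F (tag mu) (tagged mu).
Proof. by rewrite sig_big_dep. Qed.

Lemma gen0 (k : pzRingType) (M : FSBop_module k) r (deg : 'I_r -> nat)
  (x : forall i, M (deg i)) m : generated_by x (0 : M m).
Proof.
exists (fun _ _ => 0); rewrite big1 // => i _; rewrite big1 // => f _; by rewrite scale0r.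
Qed.

Lemma genD (k : pzRingType) (M : FSBop_module k) r (deg : 'I_r -> nat)
  (x : forall i, M (deg i)) m (y1 y2 : M m) :
  generated_by x y1 -> generated_by x y2 -> generated_by x (y1 + y2).
Proof.
move=> [c1 ->] [c2 ->]; exists (fun i f => c1 i f + c2 i f).
rewrite -big_split; apply: eq_bigr => i _; rewrite -big_split; apply: eq_bigr => f _.
by rewrite scalerDl.
Qed.

Lemma genZ (k : pzRingType) (M : FSBop_module k) r (deg : 'I_r -> nat)
  (x : forall i, M (deg i)) m (y : M m) (a : k) :
  generated_by x y -> generated_by x (a *: y).
Proof.
move=> [c ->]; exists (fun i f => a * c i f).
rewrite scaler_sumr; apply: eq_bigr => i _; rewrite scaler_sumr; apply: eq_bigr => f _.
by rewrite scalerA.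
Qed.

Lemma gen_sum (k : pzRingType) (M : FSBop_module k) r (deg : 'I_r -> nat)
  (x : forall i, M (deg i)) m J (F : 'I_J -> M m) :
  (forall j, generated_by x (F j)) -> generated_by x (\sum_(j < J) F j).
Proof.
move=> H; apply: (big_ind (@generated_by _ M _ _ x m)) => [|a b|j _]; 
  [exact: gen0 | exact: genD | exact: H].
Qed.

Lemma gen_act (k : pzRingType) (M : FSBop_module k) r (deg : 'I_r -> nat)
  (x : forall i, M (deg i)) m (j : 'I_r) (phi : {ffun obj m -> obj (deg j)}) :
  is_mor phi -> generated_by x (act M phi (x j)).
Proof.
move=> H.
exists (fun i f => if Tagged (fun i => {ffun obj m -> obj (deg i)}) f ==
          Tagged (fun i => {ffun obj m -> obj (deg i)}) phi then 1 else 0).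
rewrite sum_sig.
rewrite (bigD1 (Tagged (fun i => {ffun obj m -> obj (deg i)}) phi : Mon deg m)) //=.
rewrite eqxx scale1r big1 ?addr0 // => mu /andP[_ ne].
case: mu ne => i f ne /=; by rewrite (negbTE ne) scale0r.
Qed.

Lemma PhiD (k : pzRingType) (M : FSBop_module k) r (deg : 'I_r -> nat)
  (x : forall i, M (deg i)) m (c1 c2 : Mon deg m -> k) :
  Phi M x (fun mu => c1 mu + c2 mu) = Phi M x c1 + Phi M x c2.
Proof. by rewrite /Phi -big_split; apply: eq_bigr => mu _; rewrite scalerDl. Qed.

Lemma PhiZ (k : pzRingType) (M : FSBop_module k) r (deg : 'I_r -> nat)
  (x : forall i, M (deg i)) m (a : k) (c : Mon deg m -> k) :
  Phi M x (fun mu => a * c mu) = a *: Phi M x c.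
Proof. by rewrite /Phi scaler_sumr; apply: eq_bigr => mu _; rewrite scalerA. Qed.

Theorem mainTheorem1 (k : pzRingType) (M : FSBop_module k)
  (N : forall n : nat, M n -> Prop) :
  left_noetherian k -> fg_module M -> is_submodule N -> fg_submodule N.
Proof.
move=> noeth [r [deg [x [_ gen]]]] [N0 ND NZ Nact].
have NB : forall m (y z : M m), N m y -> N m z -> N m (y - z).
  by move=> m y z Hy Hz; rewrite -scaleN1r; apply: ND => //; exact: NZ.
have Nsum : forall m J (F : 'I_J -> M m), (forall j, N m (F j)) -> N m (\sum_(j < J) F j).
  move=> m J F H; apply: (big_ind (N m)) => [|a b|j _]; [exact: N0 | exact: ND | exact: H].
pose I (u : XM deg) (a : k) := exists c : Mon deg (tag u) -> k,
  [/\ N (tag u) (Phi M x c), za (tagged u) c & c (tagged u) = a].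
have Iideal : forall u, validX u -> is_left_ideal (I u).
  move=> u _; split.
  - by exists (fun _ => 0); rewrite Phi0; split.
  - move=> a b [c1 [h1 z1 e1]] [c2 [h2 z2 e2]]; exists (fun mu => c1 mu + c2 mu); split.
    + by rewrite PhiD; apply: ND.
    + by move=> mu Hm lt; rewrite z1 // z2 // addr0.
    + by rewrite e1 e2.
  - move=> a b [c [h z e]]; exists (fun mu => a * c mu); split.
    + by rewrite PhiZ; apply: NZ.
    + by move=> mu Hm lt; rewrite z // mulr0.
    + by rewrite e.
have [J [us [as_ [Hus Hbasis]]]] := fin_basis noeth (@dvdX_trans _ deg) (@wqoX _ deg) Iideal.
pose v j := proj1_sig (constructive_indefinite_description _ (Hus j).2).
have Hv : forall j, [/\ N _ (Phi M x (v j)), za (tagged (us j)) (v j) & v j (tagged (us j)) = as_ j].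
  by move=> j; rewrite /v; case: constructive_indefinite_description.
pose z := fun j => Phi M x (v j).
exists J, (fun j => tag (us j)), z; split; first by move=> j; case: (Hv j).
move=> m y Hy.
have [c0 Ec0] := gen m y Logic.I.
rewrite sum_sig in Ec0.
pose c1 := fun mu : Mon deg m => c0 (tag mu) (tagged mu).
have Ey : y = Phi M x c1 by [].
have main : forall nb (c : Mon deg m -> k), N m (Phi M x c) ->
   (forall mu, morM mu -> c mu != 0 -> (rank mu < nb)%N) -> generated_by z (Phi M x c).
  elim=> [|nb IH] c Nc Hb.
    rewrite /Phi big1; first exact: gen0.
    move=> mu Hm; have -> : c mu = 0 by apply/eqP; apply: contraT => nz; have := Hb mu Hm nz.
    by rewrite scale0r.
  case: (classic (exists mu, morM mu && (c mu != 0)))=> [[mu1 /andP[Hm1 nz1]]|nex]; last first.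
    rewrite /Phi big1; first exact: gen0.
    move=> mu Hm; have -> : c mu = 0.
      by apply/eqP; apply: contraT => nz; case: nex; exists mu; rewrite Hm nz.
    by rewrite scale0r.
  pose Q t := exists mu, [/\ morM mu, c mu != 0 & (rank mu + t = nb)%N].
  have [t0 [[mu0 [H0 nz0 E0]] Hmin]] : exists t, Q t /\ forall t', (t' < t)%N -> ~ Q t'.
    apply: (@min_ex Q (nb - rank mu1)); exists mu1; split=> //.
    have := Hb mu1 Hm1 nz1; lia.
  have maxi : forall mu, morM mu -> c mu != 0 -> ~ ltM mu0 mu.
    move=> mu Hm nz lt; have := rank_lt H0 lt; have := Hb mu Hm nz => h1 h2.
    apply: (Hmin (nb - rank mu)%N); first lia.
    by exists mu; split=> //; lia.
  have zac : za mu0 c.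
    by move=> mu Hm lt; apply/eqP; apply: contraT => nz; case: (maxi mu Hm nz lt).
  have Ia : I (existT _ m mu0) (c mu0) by exists c; split.
  have [b [Eb Hb2]] := Hbasis (existT _ m mu0) (c mu0) H0 Ia.
  have HW : forall j, exists w : Mon deg m -> k, [/\ N m (Phi M x w),
      generated_by z (Phi M x w), za mu0 w & b j * w mu0 = b j * as_ j].
    move=> j; case: (eqVneq (b j) 0) => [bj0|bnz].
      exists (fun _ => 0); rewrite Phi0 bj0 !mul0r; split=> //; first exact: gen0.
    have [phi [Ophi Ephi]] := Hb2 j bnz.
    simpl in phi, Ephi.
    exists (pb phi (v j)).
    have [Nv zv ev] := Hv j.
    have [za' e'] := pb_top Ophi (Hus j).1 zv.
    split.
    - by rewrite Phi_pb; [apply: Nact; [exact: Ophi.1 | exact: Nv] | exact: Ophi.1].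
    - by rewrite Phi_pb; [exact: gen_act (Ophi.1) | exact: Ophi.1].
    - by rewrite Ephi.
    - by rewrite Ephi e' ev.
  have [W HWj] := choice_gen HW.
  pose c' := fun mu => c mu - \sum_(j < J) b j * W j mu.
  have Ephi' := Phi_lin x c b W.
  have Nc' : N m (Phi M x c').
    rewrite /c' Ephi'; apply: NB => //; apply: Nsum => j; apply: NZ; by case: (HWj j).
  have Gc' : generated_by z (Phi M x c').
    apply: IH Nc' _ => mu Hm nz.
    have ne : mu <> mu0.
      move=> E; move: nz; rewrite /c' E.
      rewrite (eq_bigr (fun j => b j * as_ j)) => [|j _]; last by case: (HWj j).
      by rewrite -Eb subrr eqxx.
    have nlt : ~ ltM mu0 mu.
      move=> lt; move: nz; rewrite /c' zac // big1 ?subrr ?eqxx // => j _.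
      by case: (HWj j) => _ _ zw _; rewrite zw // mulr0.
    case: (ltM_total Hm H0 ne) => h; last by [].
    have := rank_lt Hm h; lia.
  have -> : Phi M x c = Phi M x c' + \sum_(j < J) b j *: Phi M x (W j).
    by rewrite /c' Ephi' subrK.
  apply: genD Gc' _; apply: gen_sum => j; apply: genZ; by case: (HWj j).
rewrite Ey; apply: (main #|Mon deg m|.+1); first by rewrite -Ey.
move=> mu _ _; rewrite ltnS; exact: max_card.
Qed.
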